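(* Let $\Gamma$ be as below, let $k>v_1$ be an integer, and let $\varphi=(x(t),y(t))$ be the $k$-jet of an element of $\Sigma_\Gamma$ (so $x(t)=t^{v_0}$ and $y(t)$ is a polynomial of degree $\le k$ starting with $t^{v_1}$). Define $$T_1=\{\,j^k\big(x'(t)\epsilon+\varphi^*(g),\ y'(t)\epsilon+\varphi^*(h)\big):\ \epsilon\in\mathcal M_1^2,\ g,h\in\mathcal M_2^2\,\},$$ $$\widetilde T=\{\,j^k\big(x'(t)\epsilon+\varphi^*(g),\ y'(t)\epsilon+\varphi^*(h)\big):\ \epsilon\in\mathcal M_1^2,\ g\in\langle X^2,Y\rangle,\ h\in\mathcal M_2^2\,\}$$ (these are the tangent spaces at $\varphi$ to the orbits of $\varphi$ under the groups of $k$-jets of $\mathcal A_1$, resp. $\widetilde{\mathcal A}$). Then for $b\in\mathbb C$, $b\ne0$: $(0,bt^k)\in T_1$ if and only if there exist $g,h\in\mathcal M_2^2$ with $\mathrm{ord}_t\big(\varphi^*(h)x'(t)-\varphi^*(g)y'(t)\big)=k+v_0-1$; and $(0,bt^k)\in\widetilde T$ if and only if there exist $g\in\langle X^2,Y\rangle$, $h\in\mathcal M_2^2$ with $\mathrm{ord}_t\big(\varphi^*(h)x'(t)-\varphi^*(g)y'(t)\big)=k+v_0-1$.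
   Context: $\mathcal O_1=\mathbb C\{t\}$, $\mathcal O_2=\mathbb C\{X,Y\}$, with maximal ideals $\mathcal M_1,\mathcal M_2$; $\varphi^*(h)=h(x(t),y(t))$; $j^k$ denotes the $k$-jet (truncation modulo $t^{k+1}$, componentwise); $\langle X^2,Y\rangle$ is the ideal of $\mathcal O_2$ generated by $X^2$ and $Y$. $\Gamma$ is the semigroup of values of a plane branch with minimal generators $v_0<v_1<\cdots<v_g$ and conductor $c$; $\Sigma_\Gamma$ is the set of Puiseux parametrizations $(t^{v_0},t^{v_1}+\sum_{v_1<i<c}a_it^i)$ (primitive, $v_0\nmid v_1$) whose semigroup of values $\{\mathrm{ord}_t h(x(t),y(t)): h\in\mathcal O_2,\ h(x,y)\ne0\}$ equals $\Gamma$. *)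

(* Defs.v *)
From HB Require Import structures.
From mathcomp Require Import all_boot all_order all_algebra.
Set Implicit Arguments. Unset Strict Implicit. Unset Printing Implicit Defensive.
Import GRing.Theory Num.Theory.
Local Open Scope ring_scope.

(* Base field: an algebraically closed numeric field (the role of C; e.g. algC).
   Power series are formal: a series in t is a coefficient function nat -> R,
   a series in X,Y is a coefficient function nat -> nat -> R (g a b = coeff of X^a Y^b). *)
Section Defs.
Variable R : numClosedFieldType.

Definition ser1 := nat -> R.
Definition ser2 := nat -> nat -> R.

(* phi^*(g) = g(x(t), y(t)) for polynomials x, y with zero constant term:
   only monomials X^a Y^b with a, b <= n contribute to the coefficient of t^n. *)
Definition pullback (x y : {poly R}) (g : ser2) : ser1 :=
  fun n => \sum_(a < n.+1) \sum_(b < n.+1) g a b * (x ^+ a * y ^+ b)`_n.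

Definition pmul (p : {poly R}) (e : ser1) : ser1 :=
  fun n => \sum_(i < n.+1) p`_i * e (n - i)%N.

Definition inM1sq (e : ser1) : Prop := e 0%N = 0 /\ e 1%N = 0.
Definition inM2sq (g : ser2) : Prop := g 0%N 0%N = 0 /\ g 1%N 0%N = 0 /\ g 0%N 1%N = 0.
Definition inX2Y (g : ser2) : Prop := g 0%N 0%N = 0 /\ g 1%N 0%N = 0.

Definition jet (k : nat) (p : {poly R}) : {poly R} := \poly_(i < k.+1) p`_i.

Definition ord_eq (F : ser1) (m : nat) : Prop :=
  (forall n, (n < m)%N -> F n = 0) /\ F m != 0.

Definition tangent_mem (Gadm : ser2 -> Prop) (x y : {poly R}) (k : nat)
    (p q : {poly R}) : Prop :=
  exists (e : ser1) (g h : ser2), inM1sq e /\ Gadm g /\ inM2sq h /\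
    forall n, (n <= k)%N ->
      pmul x^`() e n + pullback x y g n = p`_n /\
      pmul y^`() e n + pullback x y h n = q`_n.

Definition value_semigroup (x y : {poly R}) (n : nat) : Prop :=
  exists h : ser2, (exists m, pullback x y h m != 0) /\ ord_eq (pullback x y h) n.

Definition min_gen (G : nat -> Prop) (n : nat) : Prop :=
  G n /\ (0 < n)%N /\
  ~ (exists a b, G a /\ G b /\ (0 < a)%N /\ (0 < b)%N /\ n = (a + b)%N).

Definition conductor (G : nat -> Prop) (c : nat) : Prop :=
  (forall n, (c <= n)%N -> G n) /\ (c = 0%N \/ ~ G c.-1).

Definition semigroup_data (G : nat -> Prop) (v0 v1 c : nat) : Prop :=
  min_gen G v0 /\ min_gen G v1 /\ (v0 < v1)%N /\
  (forall n, min_gen G n -> (v0 <= n)%N) /\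
  (forall n, min_gen G n -> n <> v0 -> (v1 <= n)%N) /\
  conductor G c.

Definition primitive_param (v0 : nat) (y : {poly R}) : Prop :=
  foldl gcdn v0 [seq i <- iota 0 (size y) | y`_i != 0] = 1%N.

Definition in_Sigma (G : nat -> Prop) (v0 v1 c : nat) (x y : {poly R}) : Prop :=
  [/\ x = 'X^v0, y`_v1 = 1, (forall i, (i < v1)%N -> y`_i = 0),
      (forall i, (c <= i)%N -> y`_i = 0) &
      [/\ primitive_param v0 y, ~~ (v0 %| v1)%N &
          forall n, G n <-> value_semigroup x y n]].

End Defs.

(* Main.v *)
Require Import Defs.
From HB Require Import structures.
From mathcomp Require Import all_boot all_order all_algebra.
From mathcomp Require Import zify ring.
Import GRing.Theory Num.Theory.
Local Open Scope ring_scope.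

Lemma tr_pmul (R : numClosedFieldType) (p : {poly R}) (e : ser1 R) (N n : nat) :
  (n <= N)%N -> (p * \poly_(i < N.+1) e i)`_n = pmul p e n.
Proof.
move=> nN; rewrite coefM /pmul; apply: eq_bigr => i _.
rewrite coef_poly; case: ifP => // /negP H; exfalso; apply: H.
have := ltn_ord i; lia.
Qed.

Lemma tr_coef (R : numClosedFieldType) (f : ser1 R) (N n : nat) :
  (n <= N)%N -> (\poly_(i < N.+1) f i)`_n = f n.
Proof. by move=> nN; rewrite coef_poly ifT //; lia. Qed.

Arguments tr_pmul {R} p e {N n}.

Lemma low_mul (R : numClosedFieldType) (p q : {poly R}) (m l : nat) :
  (forall i, (i < m)%N -> p`_i = 0) -> (forall i, (i < l)%N -> q`_i = 0) ->
  forall i, (i < m + l)%N -> (p * q)`_i = 0.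
Proof.
move=> hp hq i hi; rewrite coefM; apply: big1 => j _.
case: (ltnP j m) => hj; first by rewrite hp // mul0r.
rewrite hq ?mulr0 //; have := ltn_ord j; lia.
Qed.

Arguments low_mul {R p q m l}.

Lemma low_exp (R : numClosedFieldType) (p : {poly R}) (m b : nat) :
  (forall i, (i < m)%N -> p`_i = 0) ->
  forall i, (i < b * m)%N -> (p ^+ b)`_i = 0.
Proof.
move=> hp; elim: b => [|b IH] i hi; first by rewrite mul0n in hi.
rewrite exprS; have H : (i < m + b * m)%N by rewrite mulSn in hi.
exact: (low_mul hp IH i H).
Qed.

Arguments low_exp {R p m}.

Lemma pull_low (R : numClosedFieldType) (x y : {poly R}) (g : ser2 R) (v0 v1 n : nat) :
  x = 'X^v0 -> (forall i, (i < v1)%N -> y`_i = 0) -> (0 < v0)%N -> (v0 < v1)%N ->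
  g 0%N 0%N = 0 -> g 1%N 0%N = 0 -> (n <= v0)%N -> pullback x y g n = 0.
Proof.
move=> hx hy v0p v01 g00 g10 nv; rewrite /pullback; apply: big1 => a _.
apply: big1 => c _.
have lx : forall i, (i < v0)%N -> x`_i = 0.
  move=> i hi; rewrite hx coefXn (_ : (i == v0) = false) //; apply/eqP; lia.
have L : (n < a * v0 + c * v1)%N -> (x ^+ a * y ^+ c)`_n = 0.
  by move=> H; exact: (low_mul (low_exp a lx) (low_exp c hy) n H).
have [c0|cp] := eqVneq (c : nat) 0%N.
  have [a0|ap] := eqVneq (a : nat) 0%N; first by rewrite a0 c0 g00 mul0r.
  have [a1|a2] := eqVneq (a : nat) 1%N; first by rewrite a1 c0 g10 mul0r.
  rewrite L ?mulr0 //; rewrite c0; nia.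
rewrite L ?mulr0 //; nia.
Qed.

Arguments pull_low {R x y g v0 v1 n}.
Arguments tr_pmul {R} p e {N n}.
Arguments tr_coef {R} f {N n}.

Lemma pmulZ (R : numClosedFieldType) (p : {poly R}) (s : R) (e : ser1 R) n :
  pmul p (fun m => s * e m) n = s * pmul p e n.
Proof. rewrite /pmul mulr_sumr; apply: eq_bigr => i _; by rewrite mulrCA. Qed.

Lemma pullbackZ (R : numClosedFieldType) (x y : {poly R}) (s : R) (g : ser2 R) n :
  pullback x y (fun a c => s * g a c) n = s * pullback x y g n.
Proof.
rewrite /pullback mulr_sumr; apply: eq_bigr => a _; rewrite mulr_sumr.
by apply: eq_bigr => c _; rewrite mulrA.
Qed.

Lemma main_gen (R : numClosedFieldType) (Gadm : ser2 R -> Prop) (v0 v1 k : nat)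
    (x y : {poly R}) (b : R) :
  (0 < v0)%N -> (v0 < v1)%N -> (v0 <= k)%N -> x = 'X^v0 ->
  (forall i, (i < v1)%N -> y`_i = 0) -> b != 0 ->
  (forall g, Gadm g -> g 0%N 0%N = 0 /\ g 1%N 0%N = 0) ->
  (forall g s, Gadm g -> Gadm (fun a c => s * g a c)) ->
  (tangent_mem Gadm x y k 0 (b *: 'X^k) <->
     exists g h : ser2 R, Gadm g /\ inM2sq h /\
       ord_eq (fun n => pmul x^`() (pullback x y h) n - pmul y^`() (pullback x y g) n)
              (k + v0).-1).
Proof.
move=> v0p v01 v0k hx hy bnz Gpr Gsc.
have xA : forall (A : {poly R}) m,
    (x^`() * A)`_m = if (m < v0.-1)%N then 0 else A`_(m - v0.-1) *+ v0.
  move=> A m; rewrite hx derivXn mulrnAl coefMn coefXnM.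
  by case: ifP => //; rewrite mul0rn.
pose N := (k + v0)%N.
have KF : forall (e : ser1 R) (g h : ser2 R) m, (m <= N)%N ->
   pmul x^`() (pullback x y h) m - pmul y^`() (pullback x y g) m =
   (x^`() * (y^`() * \poly_(i < N.+1) e i + \poly_(i < N.+1) pullback x y h i))`_m
   - (y^`() * (x^`() * \poly_(i < N.+1) e i + \poly_(i < N.+1) pullback x y g i))`_m.
  move=> e g h m mN.
  rewrite -(tr_pmul _ (pullback x y h) mN) -(tr_pmul _ (pullback x y g) mN) -!coefB.
  by congr (nth 0 (polyseq _) m); ring.
have yB : forall B : {poly R}, forall m M, (forall j, (j <= M)%N -> B`_j = 0) ->
    (m <= M + v1.-1)%N -> (y^`() * B)`_m = 0.
  move=> B m M HB hm; rewrite coefM; apply: big1 => j _.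
  case: (ltnP j.+1 v1) => hj; first by rewrite coef_deriv hy // mul0rn mul0r.
  rewrite HB ?mulr0 //; lia.
split.
- move=> [e [g [h [[e0 e1] [Gg [Hh Hn]]]]]]; exists g, h; split=> //; split=> //.
  pose E := \poly_(i < N.+1) e i.
  pose Pg := \poly_(i < N.+1) pullback x y g i.
  pose Ph := \poly_(i < N.+1) pullback x y h i.
  have HB : forall j, (j <= k)%N -> (x^`() * E + Pg)`_j = 0.
    move=> j jk; rewrite coefD tr_pmul; last lia.
    rewrite tr_coef; last lia.
    by have [-> _] := Hn j jk; rewrite coef0.
  have HA : forall j, (j <= k)%N -> (y^`() * E + Ph)`_j = (b *: 'X^k)`_j.
    move=> j jk; rewrite coefD tr_pmul; last lia.
    rewrite tr_coef; last lia.
    by have [_ ->] := Hn j jk.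
  split.
  + move=> n nlt; rewrite (KF e) -/E -/Pg -/Ph; last lia.
    rewrite (yB _ n k HB); last lia.
    rewrite subr0 xA; case: ifP => _; first done.
    rewrite HA; last lia.
    rewrite coefZ coefXn (_ : ((n - v0.-1)%N == k) = false) ?mulr0 ?mul0rn //.
    apply/eqP; lia.
  + rewrite (KF e) -/E -/Pg -/Ph; last lia.
    rewrite (yB _ _ k HB); last lia.
    rewrite subr0 xA ifF; last (apply/negbTE; rewrite -leqNgt; lia).
    rewrite (_ : ((k + v0).-1 - v0.-1)%N = k); last lia.
    rewrite HA // coefZ coefXn eqxx mulr1 mulrn_eq0 negb_or bnz andbT.
    by rewrite -lt0n.
- move=> [g [h [Gg [Hh [Flow Fk]]]]].
  have [g00 g10] := Gpr g Gg.
  have pg0 : forall n, (n <= v0)%N -> pullback x y g n = 0.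
    by move=> n nv; apply: (pull_low hx hy v0p v01 g00 g10 nv).
  pose e := fun n => - pullback x y g (n + v0.-1)%N / v0%:R.
  have v0nz : (v0%:R : R) != 0 by rewrite pnatr_eq0 -lt0n.
  have Be : forall n, pmul x^`() e n + pullback x y g n = 0.
    move=> n; rewrite -(tr_pmul _ _ (leqnn n)) xA; case: ifP => hn.
      by rewrite pg0 ?add0r //; lia.
    rewrite tr_coef; last lia.
    rewrite /e /= subnK; last lia.
    by rewrite -[_ *+ v0]mulr_natr divfK // addNr.
  have e0 : e 0%N = 0 by rewrite /e add0n pg0 ?oppr0 ?mul0r //; lia.
  have e1 : e 1%N = 0.
    by rewrite /e (_ : (1 + v0.-1)%N = v0); [rewrite pg0 ?oppr0 ?mul0r // | lia].
  have Ha : forall n, (n <= k)%N ->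
      (pmul y^`() e n + pullback x y h n) *+ v0 =
      pmul x^`() (pullback x y h) (n + v0.-1) - pmul y^`() (pullback x y g) (n + v0.-1).
    move=> n nk; rewrite (KF e); last lia.
    rewrite (yB _ _ N); first last.
    - lia.
    - move=> j jN; rewrite coefD tr_pmul // tr_coef //; exact: Be.
    rewrite subr0 xA ifF; last (apply/negbTE; rewrite -leqNgt; lia).
    rewrite (_ : (n + v0.-1 - v0.-1)%N = n); last lia.
    by rewrite coefD tr_pmul ?tr_coef //; lia.
  have a0 : forall n, (n < k)%N -> pmul y^`() e n + pullback x y h n = 0.
    move=> n nk; apply/eqP.
    have := Ha n (ltnW nk); rewrite Flow; last lia.
    move/eqP; rewrite mulrn_eq0 => /orP [|//].
    by move/eqP => v00; rewrite v00 in v0p.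
  have ak : pmul y^`() e k + pullback x y h k != 0.
    apply/negP => /eqP H; move: Fk; rewrite (_ : (k + v0).-1 = (k + v0.-1))%N; last lia.
    rewrite -Ha // H mul0rn; by move/eqP; apply.
  set c := pmul y^`() e k + pullback x y h k in ak.
  exists (fun n => b / c * e n), (fun i j => b / c * g i j), (fun i j => b / c * h i j).
  split; first by rewrite /inM1sq e0 e1 !mulr0.
  split; first exact: Gsc.
  split; first by case: Hh => [h1 [h2 h3]]; rewrite /inM2sq h1 h2 h3 !mulr0.
  move=> n nk; rewrite !pmulZ !pullbackZ -!mulrDr Be mulr0 coef0; split=> //.
  rewrite coefZ coefXn.
  have [nk'|nk'] := eqVneq n k.
    by rewrite nk' -/c divfK // mulr1.
  move/eqP: nk' => nk'; rewrite a0 ?mulr0 //; lia.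
Qed.

Theorem lemma3p1 (R : numClosedFieldType) (G : nat -> Prop) (v0 v1 c k : nat)
    (psix psiy : {poly R}) (b : R) :
  semigroup_data G v0 v1 c ->
  in_Sigma G v0 v1 c psix psiy ->
  (v1 < k)%N ->
  b != 0 ->
  let x := jet k psix in
  let y := jet k psiy in
  (tangent_mem (@inM2sq R) x y k 0 (b *: 'X^k) <->
     exists g h : ser2 R, inM2sq g /\ inM2sq h /\
       ord_eq (fun n => pmul x^`() (pullback x y h) n - pmul y^`() (pullback x y g) n)
              (k + v0).-1)
  /\
  (tangent_mem (@inX2Y R) x y k 0 (b *: 'X^k) <->
     exists g h : ser2 R, inX2Y g /\ inM2sq h /\
       ord_eq (fun n => pmul x^`() (pullback x y h) n - pmul y^`() (pullback x y g) n)
              (k + v0).-1).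
Proof.
move=> [[_ [v0p _]] [_ [v01 _]]] [hx _ hy _ _] v1k bnz x y.
have hx' : x = 'X^v0.
  rewrite /x /jet hx; apply/polyP => i; rewrite coef_poly coefXn.
  case: ltnP => // hi; rewrite (_ : (i == v0) = false) //; apply/eqP; lia.
have hy' : forall i, (i < v1)%N -> y`_i = 0.
  by move=> i hi; rewrite /y /jet coef_poly hy //; case: ifP.
have v0k : (v0 <= k)%N by lia.
split.
- apply: (@main_gen R (@inM2sq R) v0 v1 k x y b v0p v01 v0k hx' hy' bnz).
  + by move=> g [? [? ?]].
  + by move=> g s [g1 [g2 g3]]; rewrite /inM2sq g1 g2 g3 !mulr0.
- apply: (@main_gen R (@inX2Y R) v0 v1 k x y b v0p v01 v0k hx' hy' bnz).
  + by move=> g [? ?].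
  + by move=> g s [g1 g2]; rewrite /inX2Y g1 g2 !mulr0.
Qed.
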